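(* Consider $\min_u F(u)+G(u)$ under the assumptions below, and let $\{(y^t,z^t,x^t)\}$ be generated by the modified PR iteration with $\gamma\in(0,\frac{1}{12L_F})$. Then the sequence is bounded, and any cluster point $(\bar y,\bar z,\bar x)$ satisfies $\bar y=\bar z$ and $0\in\nabla F(\bar z)+\partial G(\bar z)$.
   Context: Assumptions: $F:\mathbb{R}^n\to\mathbb{R}$ is convex and differentiable with $\nabla F$ Lipschitz continuous with modulus at most $L_F>0$; $G:\mathbb{R}^n\to(-\infty,\infty]$ is proper, lower semicontinuous, and $\operatorname{Argmin}_u\{\tau G(u)+\frac12\|u-w\|^2\}$ is nonempty for every $w$ and every $\tau>0$; $F+G$ is coercive ($\liminf_{\|u\|\to\infty}(F+G)(u)=\infty$). Modified PR iteration: given $x^0$ and $\gamma\in(0,\frac1{12L_F})$, for $t=0,1,\dots$: $y^{t+1}=\operatorname{argmin}_y\{F(y)+\frac{5L_F}{2}\|y\|^2+\frac1{2\gamma}\|y-x^t\|^2\}$; $z^{t+1}\in\operatorname{Argmin}_z\{G(z)-\frac{5L_F}{2}\|z\|^2+\frac1{2\gamma}\|2y^{t+1}-x^t-z\|^2\}$; $x^{t+1}=x^t+2(z^{t+1}-y^{t+1})$. $\partial G$ is the limiting subdifferential: $v\in\partial G(x)$ iff there exist $x^t\to x$ with $G(x^t)\to G(x)$ and $v^t\to v$ such that $\liminf_{z\to x^t, z\ne x^t}\frac{G(z)-G(x^t)-\langle v^t,z-x^t\rangle}{\|z-x^t\|}\ge0$ for each $t$. *)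

(* Defs.v *)
From Stdlib Require Import Reals Lra.
From Stdlib Require Fin.
Open Scope R_scope.

Definition vec (n : nat) : Type := Fin.t n -> R.

Definition vadd {n} (u v : vec n) : vec n := fun i => u i + v i.
Definition vsub {n} (u v : vec n) : vec n := fun i => u i - v i.
Definition vscal {n} (a : R) (u : vec n) : vec n := fun i => a * u i.
Definition vzero {n} : vec n := fun _ => 0.

Fixpoint dot (n : nat) : vec n -> vec n -> R :=
  match n return vec n -> vec n -> R with
  | O => fun _ _ => 0
  | S m => fun u v => u Fin.F1 * v Fin.F1
                      + dot m (fun i => u (Fin.FS i)) (fun i => v (Fin.FS i))
  end.

Definition norm {n} (u : vec n) : R := sqrt (dot n u u).

(* Extended reals (-oo, +oo]: [Some a] is the real a, [None] is +oo. *)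
Definition ereal := option R.
Definition eplus (g : ereal) (c : R) : ereal := option_map (fun a => a + c) g.
Definition escale (tau : R) (g : ereal) : ereal := option_map (fun a => tau * a) g.
Definition ele (a b : ereal) : Prop :=
  match a, b with
  | _, None => True
  | None, Some _ => False
  | Some x, Some y => x <= y
  end.
Definition rlt_e (c : R) (g : ereal) : Prop :=
  match g with None => True | Some a => c < a end.

Definition is_argmin {n} (f : vec n -> ereal) (u : vec n) : Prop :=
  forall v, ele (f u) (f v).
Definition is_argmin_R {n} (f : vec n -> R) (u : vec n) : Prop :=
  forall v, f u <= f v.

Definition convex {n} (F : vec n -> R) : Prop :=
  forall x y l, 0 <= l <= 1 ->
    F (vadd (vscal l x) (vscal (1 - l) y)) <= l * F x + (1 - l) * F y.

Definition has_gradient {n} (F : vec n -> R) (gradF : vec n -> vec n) : Prop :=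
  forall x eps, 0 < eps -> exists delta, 0 < delta /\
    forall h, norm h < delta ->
      Rabs (F (vadd x h) - F x - dot n (gradF x) h) <= eps * norm h.

Definition lipschitz {n} (T : vec n -> vec n) (L : R) : Prop :=
  forall x y, norm (vsub (T x) (T y)) <= L * norm (vsub x y).

Definition proper {n} (G : vec n -> ereal) : Prop := exists x a, G x = Some a.

Definition lsc {n} (G : vec n -> ereal) : Prop :=
  forall x c, rlt_e c (G x) -> exists delta, 0 < delta /\
    forall y, norm (vsub y x) < delta -> rlt_e c (G y).

Definition coercive {n} (F : vec n -> R) (G : vec n -> ereal) : Prop :=
  forall M, exists r, forall u, r < norm u -> rlt_e M (eplus (G u) (F u)).

Definition converges {n} (s : nat -> vec n) (x : vec n) : Prop :=
  forall eps, 0 < eps -> exists N, forall t, (N <= t)%nat -> norm (vsub (s t) x) < eps.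

Definition frechet_subgrad {n} (G : vec n -> ereal) (x v : vec n) : Prop :=
  exists gx, G x = Some gx /\
    forall eps, 0 < eps -> exists delta, 0 < delta /\
      forall z, 0 < norm (vsub z x) < delta ->
        match G z with
        | None => True
        | Some gz => - eps * norm (vsub z x) <= gz - gx - dot n v (vsub z x)
        end.

Definition limiting_subgrad {n} (G : vec n -> ereal) (x v : vec n) : Prop :=
  exists (xs vs : nat -> vec n) (gx : R),
    G x = Some gx /\
    converges xs x /\
    (forall eps, 0 < eps -> exists N, forall t, (N <= t)%nat ->
        exists g, G (xs t) = Some g /\ Rabs (g - gx) < eps) /\
    converges vs v /\
    (forall t, frechet_subgrad G (xs t) (vs t)).

Definition cluster_point3 {n} (y z x : nat -> vec n) (yb zb xb : vec n) : Prop :=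
  exists phi : nat -> nat, (forall k, (phi k < phi (S k))%nat) /\
    converges (fun k => y (phi k)) yb /\
    converges (fun k => z (phi k)) zb /\
    converges (fun k => x (phi k)) xb.

(* Main.v *)
Require Import Defs.
From Stdlib Require Import Reals.
Open Scope R_scope.
From Stdlib Require Import Lra Lia Psatz FunctionalExtensionality.

Lemma vec_ext {n} (u v : vec n) : (forall i, u i = v i) -> u = v.
Proof. intros; apply functional_extensionality; auto. Qed.

Lemma dot_comm n (u v : vec n) : dot n u v = dot n v u.
Proof. induction n; simpl; auto. rewrite IHn; ring. Qed.

Lemma dot_ext n (u u' v v' : vec n) : (forall i, u i = u' i) -> (forall i, v i = v' i) ->
  dot n u v = dot n u' v'.
Proof. intros; f_equal; apply vec_ext; auto. Qed.

Lemma dot_addl n (u v w : vec n) : dot n (vadd u v) w = dot n u w + dot n v w.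
Proof. induction n; simpl. ring. unfold vadd in *. rewrite IHn. ring. Qed.

Lemma dot_subl n (u v w : vec n) : dot n (vsub u v) w = dot n u w - dot n v w.
Proof. induction n; simpl. ring. unfold vsub in *. rewrite IHn. ring. Qed.

Lemma dot_scall n a (u w : vec n) : dot n (vscal a u) w = a * dot n u w.
Proof. induction n; simpl. ring. unfold vscal in *. rewrite IHn. ring. Qed.

Lemma dot_addr n (u v w : vec n) : dot n w (vadd u v) = dot n w u + dot n w v.
Proof. rewrite !(dot_comm n w), dot_addl; auto. Qed.
Lemma dot_subr n (u v w : vec n) : dot n w (vsub u v) = dot n w u - dot n w v.
Proof. rewrite !(dot_comm n w), dot_subl; auto. Qed.
Lemma dot_scalr n a (u w : vec n) : dot n w (vscal a u) = a * dot n w u.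
Proof. rewrite !(dot_comm n w), dot_scall; auto. Qed.

Lemma dot_ge0 n (u : vec n) : 0 <= dot n u u.
Proof. induction n; simpl. lra. specialize (IHn (fun i => u (Fin.FS i))). nra. Qed.

Lemma dot_eq0 n (u : vec n) : dot n u u = 0 -> forall i, u i = 0.
Proof.
  induction n; intros H i. inversion i.
  simpl in H. pose proof (dot_ge0 n (fun i => u (Fin.FS i))).
  assert (u Fin.F1 = 0) by nra.
  assert (dot n (fun i => u (Fin.FS i)) (fun i => u (Fin.FS i)) = 0) by nra.
  revert u H H0 H1 H2. pattern i. apply (Fin.caseS' i); intros; auto.
  apply (IHn (fun i => u (Fin.FS i))); auto.
Qed.

Ltac dexp := repeat rewrite ?dot_addl, ?dot_addr, ?dot_subl, ?dot_subr, ?dot_scall, ?dot_scalr.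

Lemma norm_sq n (u : vec n) : norm u ^ 2 = dot n u u.
Proof. unfold norm. rewrite pow2_sqrt; auto using dot_ge0. Qed.
Lemma norm_ge0 n (u : vec n) : 0 <= norm u.
Proof. apply sqrt_pos. Qed.
Lemma norm_mul n (u : vec n) : norm u * norm u = dot n u u.
Proof. unfold norm. apply sqrt_sqrt, dot_ge0. Qed.

Lemma norm_le_sq n (u v : vec n) : dot n u u <= dot n v v -> norm u <= norm v.
Proof. intros; apply sqrt_le_1_alt; auto. Qed.

Lemma norm_le_of_sq n (u : vec n) a : 0 <= a -> dot n u u <= a * a -> norm u <= a.
Proof. intros. unfold norm. rewrite <- (sqrt_square a); auto. apply sqrt_le_1_alt; auto. Qed.

Lemma norm_zero n (u : vec n) : norm u = 0 -> forall i, u i = 0.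
Proof. intros H. apply dot_eq0. rewrite <- norm_mul, H. ring. Qed.

Lemma CS n (u v : vec n) : dot n u v <= norm u * norm v.
Proof.
  pose proof (dot_ge0 n u). pose proof (dot_ge0 n v).
  assert (Hsq : (dot n u v) * (dot n u v) <= dot n u u * dot n v v).
  { destruct (Req_dec (dot n u u) 0) as [Hz|Hz].
    - pose proof (dot_eq0 n u Hz) as H1.
      assert (dot n u v = 0).
      { rewrite (dot_ext n u (vscal 0 u) v v); [rewrite dot_scall; ring| |]; intros; unfold vscal;
        rewrite ?H1; ring. }
      rewrite H2, Hz. lra.
    - set (t := - dot n u v / dot n u u).
      pose proof (dot_ge0 n (vadd (vscal t u) v)) as H1.
      rewrite dot_addl, !dot_addr, !dot_scall, !dot_scalr, (dot_comm n v u) in H1.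
      unfold t in H1. assert (0 < dot n u u) by lra.
      apply Rmult_le_compat_r with (r := dot n u u) in H1; [|lra].
      field_simplify in H1; [|lra]. nra. }
  destruct (Rle_dec (dot n u v) 0). pose proof (norm_ge0 n u); pose proof (norm_ge0 n v); nra.
  assert (dot n u v * dot n u v <= (norm u * norm v) * (norm u * norm v)).
  { replace ((norm u * norm v) * (norm u * norm v)) with ((norm u * norm u) * (norm v * norm v)) by ring.
    rewrite !norm_mul. auto. }
  assert (0 <= norm u * norm v) by (apply Rmult_le_pos; apply norm_ge0).
  destruct (Rle_dec (dot n u v) (norm u * norm v)); auto. nra.
Qed.

Lemma norm_triangle n (u v : vec n) : norm (vadd u v) <= norm u + norm v.
Proof.
  apply norm_le_of_sq. pose proof (norm_ge0 n u); pose proof (norm_ge0 n v); lra.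
  dexp. rewrite (dot_comm n v u). pose proof (CS n u v).
  rewrite <- !norm_mul. nra.
Qed.

Lemma norm_scal n a (u : vec n) : norm (vscal a u) = Rabs a * norm u.
Proof.
  unfold norm. rewrite dot_scall, dot_scalr, <- Rmult_assoc, sqrt_mult_alt.
  - f_equal. replace (a * a) with (Rsqr a) by (unfold Rsqr; ring). apply sqrt_Rsqr_abs.
  - nra.
Qed.

Lemma norm_sub_sym n (u v : vec n) : norm (vsub u v) = norm (vsub v u).
Proof. unfold norm. f_equal. dexp. rewrite (dot_comm n u v). ring. Qed.

Lemma norm_eq0_eq n (u v : vec n) : norm (vsub u v) = 0 -> u = v.
Proof. intros H. apply vec_ext. intros i. pose proof (norm_zero n _ H i). unfold vsub in H0. lra. Qed.

Lemma norm_lt_sq n (u : vec n) a : 0 < a -> dot n u u < a * a -> norm u < a.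
Proof. intros. unfold norm. rewrite <- (sqrt_square a) by lra. apply sqrt_lt_1_alt. split; auto using dot_ge0. Qed.

Lemma norm_sub_tri n (a b c : vec n) : norm (vsub a c) <= norm (vsub a b) + norm (vsub b c).
Proof.
  replace (vsub a c) with (vadd (vsub a b) (vsub b c)). apply norm_triangle.
  apply vec_ext; intros; unfold vadd, vsub; ring.
Qed.

Section Main.
Variables (n : nat) (F : vec n -> R) (gradF : vec n -> vec n)
  (G : vec n -> ereal) (LF gamma : R) (y z x : nat -> vec n).
Hypothesis Hconv : convex F.
Hypothesis Hgrad : has_gradient F gradF.
Hypothesis HL : 0 < LF.
Hypothesis Hlip : lipschitz gradF LF.

Lemma conv_grad u v : F v + dot n (gradF v) (vsub u v) <= F u.
Proof.
  set (d := vsub u v). set (p := gradF v).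
  destruct (Rle_dec (F v + dot n p d) (F u)) as [?|Hn]; auto. exfalso.
  set (gap := F v + dot n p d - F u). assert (Hgap : 0 < gap) by (unfold gap; lra).
  pose proof (norm_ge0 n d) as Hnd.
  set (eps := gap / (2 * (norm d + 1))).
  assert (Heps : 0 < eps) by (unfold eps; apply Rdiv_lt_0_compat; lra).
  destruct (Hgrad v eps Heps) as [delta [Hd Hdelta]].
  set (l := Rmin 1 (delta / (2 * (norm d + 1)))).
  assert (Hl0 : 0 < l) by (unfold l; apply Rmin_glb_lt; [lra| apply Rdiv_lt_0_compat; lra]).
  assert (Hl1 : l <= 1) by apply Rmin_l.
  assert (Hl2 : l <= delta / (2 * (norm d + 1))) by apply Rmin_r.
  assert (Hh : norm (vscal l d) < delta).
  { rewrite norm_scal, Rabs_pos_eq by lra.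
    apply Rmult_le_compat_r with (r := norm d) in Hl2; auto.
    assert (delta / (2 * (norm d + 1)) * norm d < delta).
    { unfold Rdiv. rewrite Rmult_assoc. rewrite <- (Rmult_1_r delta) at 2.
      apply Rmult_lt_compat_l; auto. apply (Rmult_lt_reg_l (2 * (norm d + 1))); [lra|].
      field_simplify; lra. }
    lra. }
  specialize (Hdelta _ Hh).
  pose proof (Hconv u v l (conj (Rlt_le _ _ Hl0) Hl1)) as Hc.
  replace (vadd (vscal l u) (vscal (1 - l) v)) with (vadd v (vscal l d)) in Hc
    by (apply vec_ext; intros; unfold vadd, vscal, d, vsub; ring).
  rewrite dot_scalr, norm_scal, (Rabs_pos_eq l) in Hdelta by lra. fold p in Hdelta.
  pose proof (Rle_abs (- (F (vadd v (vscal l d)) - F v - l * dot n p d))) as Ha; rewrite Rabs_Ropp in Ha.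
  assert (l * (dot n p d - eps * norm d) <= l * (F u - F v)) by nra.
  apply Rmult_le_reg_l in H; auto.
  assert (eps * norm d < gap).
  { unfold eps. unfold Rdiv. rewrite Rmult_assoc. rewrite <- (Rmult_1_r gap) at 2.
    apply Rmult_lt_compat_l; auto. apply (Rmult_lt_reg_l (2 * (norm d + 1))); [lra|].
    field_simplify; lra. }
  unfold gap in H0. lra.
Qed.

Lemma lip_sq a b : dot n (vsub (gradF a) (gradF b)) (vsub (gradF a) (gradF b))
   <= LF * LF * dot n (vsub a b) (vsub a b).
Proof.
  rewrite <- !norm_mul. pose proof (Hlip a b). pose proof (norm_ge0 n (vsub (gradF a) (gradF b))).
  pose proof (norm_ge0 n (vsub a b)). nra.
Qed.

Lemma lip_dot a b : dot n (vsub (gradF a) (gradF b)) (vsub a b) <= LF * dot n (vsub a b) (vsub a b).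
Proof.
  eapply Rle_trans. apply CS. rewrite <- norm_mul. pose proof (Hlip a b).
  pose proof (norm_ge0 n (vsub a b)). nra.
Qed.

Lemma descent u v : F u <= F v + dot n (gradF v) (vsub u v) + LF * dot n (vsub u v) (vsub u v).
Proof.
  pose proof (conv_grad v u). pose proof (lip_dot u v).
  assert (dot n (gradF u) (vsub v u) = - dot n (gradF u) (vsub u v)).
  { replace (vsub v u) with (vscal (-1) (vsub u v)) by (apply vec_ext; intros; unfold vscal, vsub; ring).
    rewrite dot_scalr; ring. }
  rewrite dot_subl in H0. lra.
Qed.


Lemma quad_y (a xx h : vec n) s : gamma <> 0 ->
  5 * LF / 2 * norm (vadd a (vscal s h)) ^ 2 + / (2 * gamma) * norm (vsub (vadd a (vscal s h)) xx) ^ 2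
  - (5 * LF / 2 * norm a ^ 2 + / (2 * gamma) * norm (vsub a xx) ^ 2)
  = s * dot n (vadd (vscal (5 * LF) a) (vscal (/ gamma) (vsub a xx))) h
    + s ^ 2 * (5 * LF / 2 + / (2 * gamma)) * dot n h h.
Proof.
  intros Hg. rewrite !norm_sq. dexp.
  rewrite ?(dot_comm n h a), ?(dot_comm n xx a), ?(dot_comm n xx h). field. auto.
Qed.


Hypothesis Hg0 : 0 < gamma.
Hypothesis Hy : forall t,
     is_argmin_R (fun v => F v + 5 * LF / 2 * norm v ^ 2
                   + / (2 * gamma) * norm (vsub v (x t)) ^ 2) (y (S t)).

Lemma grad_zero (a xx : vec n) :
  is_argmin_R (fun v => F v + 5 * LF / 2 * norm v ^ 2 + / (2 * gamma) * norm (vsub v xx) ^ 2) a ->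
  xx = vadd a (vscal gamma (vadd (gradF a) (vscal (5 * LF) a))).
Proof.
  intros Hmin.
  set (q := vadd (vscal (5 * LF) a) (vscal (/ gamma) (vsub a xx))).
  set (g := vadd (gradF a) q).
  assert (Hgg : dot n g g = 0).
  { pose proof (dot_ge0 n g). destruct (Req_dec (dot n g g) 0) as [|Hne]; auto. exfalso.
    set (N := norm g). assert (HN : 0 < N).
    { unfold N. pose proof (norm_ge0 n g). destruct H0; auto. exfalso. apply Hne.
      rewrite <- norm_mul. rewrite <- H0. ring. }
    assert (HNN : dot n g g = N * N) by (unfold N; rewrite norm_mul; auto).
    set (C := 5 * LF / 2 + / (2 * gamma)).
    assert (HC : 0 < C) by (unfold C; assert (0 < / (2 * gamma)) by (apply Rinv_0_lt_compat; lra); lra).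
    destruct (Hgrad a (N / 4)) as [delta [Hd Hdel]]. lra.
    set (s := Rmin (Rmin 1 (delta / (2 * (N + 1)))) (/ (4 * C))).
    assert (Hs1 : s <= delta / (2 * (N + 1))) by (unfold s; eapply Rle_trans; [apply Rmin_l| apply Rmin_r]).
    assert (Hs2 : s <= / (4 * C)) by (unfold s; apply Rmin_r).
    assert (Hs0 : 0 < s).
    { unfold s. apply Rmin_glb_lt. apply Rmin_glb_lt. lra. apply Rdiv_lt_0_compat; lra.
      apply Rinv_0_lt_compat; lra. }
    set (h := vscal (-1) g).
    assert (Hnh : norm (vscal s h) = s * N).
    { unfold h. rewrite !norm_scal, (Rabs_pos_eq s) by lra. replace (Rabs (-1)) with 1 by (unfold Rabs; destruct Rcase_abs; lra). fold N. ring. }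
    assert (HsN : s * N < delta).
    { apply Rmult_le_compat_r with (r := N) in Hs1; [|lra].
      assert (delta / (2 * (N + 1)) * N < delta).
      { apply (Rmult_lt_reg_l (2 * (N + 1))); [lra|]. field_simplify; nra. }
      lra. }
    rewrite <- Hnh in HsN. specialize (Hdel _ HsN). rewrite Hnh in Hdel.
    pose proof (Hmin (vadd a (vscal s h))) as Hm. simpl in Hm.
    pose proof (quad_y a xx h s ltac:(lra)) as Hq. fold q in Hq.
    assert (Hgh : dot n g h = - (N * N)) by (unfold h; rewrite dot_scalr; lra).
    assert (Hhh : dot n h h = N * N) by (unfold h; rewrite dot_scalr, dot_scall; lra).
    unfold g in Hgh. rewrite dot_addl in Hgh.
    rewrite dot_scalr in Hdel. fold C in Hq. rewrite Hhh in Hq.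
    pose proof (Rle_abs (F (vadd a (vscal s h)) - F a - s * dot n (gradF a) h)).
    assert (0 <= s * (- (N * N)) + N / 4 * (s * N) + s ^ 2 * C * (N * N)) by nra.
    assert (s * C <= / 4).
    { apply Rmult_le_compat_r with (r := C) in Hs2; [|lra].
      replace (/ (4 * C) * C) with (/ 4) in Hs2 by (field; lra). lra. }
    assert (0 <= s * N * (- N + N / 4 + s * C * N)) by (ring_simplify; ring_simplify in H2; lra).
    assert (0 < s * N) by nra.
    assert (0 <= - N + N / 4 + s * C * N).
    { destruct (Rle_dec 0 (- N + N / 4 + s * C * N)); auto. nra. }
    nra. }
  apply vec_ext. intros i. pose proof (dot_eq0 n g Hgg i). unfold g, q, vadd, vscal, vsub in H |- *.
  assert (E : gamma * (gradF a i + (5 * LF * a i + / gamma * (a i - xx i))) = 0) by (rewrite H; ring).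
  replace (gamma * (gradF a i + (5 * LF * a i + / gamma * (a i - xx i)))) with
    (gamma * gradF a i + gamma * (5 * LF * a i) + (a i - xx i)) in E by (field; lra). lra.
Qed.

Lemma yopt t : x t = vadd (y (S t)) (vscal gamma (vadd (gradF (y (S t))) (vscal (5 * LF) (y (S t))))).
Proof. apply grad_zero, Hy. Qed.


Definition Qf (a xx w : vec n) : R :=
  - (5 * LF / 2) * norm w ^ 2 + / (2 * gamma) * norm (vsub (vsub (vscal 2 a) xx) w) ^ 2.
Definition cc : R := / (2 * gamma) - 5 * LF / 2.

Ltac dnorm4 a p w w' :=
  rewrite ?(dot_comm n p a), ?(dot_comm n w a), ?(dot_comm n w' a), ?(dot_comm n w p),
    ?(dot_comm n w' p), ?(dot_comm n w' w).

Lemma quad_psi (a p w w' : vec n) :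
  Qf a (vadd a (vscal gamma (vadd p (vscal (5 * LF) a)))) w
  - Qf a (vadd a (vscal gamma (vadd p (vscal (5 * LF) a)))) w'
  = (dot n p (vsub w a) + cc * dot n (vsub w a) (vsub w a))
    - (dot n p (vsub w' a) + cc * dot n (vsub w' a) (vsub w' a)).
Proof.
  unfold Qf, cc. rewrite !norm_sq. dexp. dnorm4 a p w w'. field. lra.
Qed.

Lemma quad_fr (a p w w' : vec n) :
  Qf a (vadd a (vscal gamma (vadd p (vscal (5 * LF) a)))) w
  - Qf a (vadd a (vscal gamma (vadd p (vscal (5 * LF) a)))) w'
  = - dot n (vadd (vscal (-1) p) (vscal (5 * LF - / gamma) (vsub w' a))) (vsub w w')
    + cc * dot n (vsub w w') (vsub w w').
Proof.
  unfold Qf, cc. rewrite !norm_sq. dexp. dnorm4 a p w w'. field. lra.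
Qed.


Hypothesis Hg1 : gamma < / (12 * LF).

Lemma gl : gamma * LF < / 12.
Proof.
  apply Rmult_lt_compat_r with (r := LF) in Hg1; auto.
  replace (/ (12 * LF) * LF) with (/ 12) in Hg1 by (field; lra). lra.
Qed.

Lemma descent_alg (D e p1 : vec n) (fy1 fy2 : R) :
  fy2 - fy1 <= dot n p1 D ->
  dot n e D <= LF * dot n D D ->
  dot n e e <= LF * LF * dot n D D ->
  let u := vscal (1/2) (vadd (vscal (1 + gamma * (5 * LF)) D) (vscal gamma e)) in
  fy2 + dot n p1 (vsub u D) + cc * dot n (vsub u D) (vsub u D)
  <= fy1 + dot n (vsub p1 e) u + cc * dot n u u - LF * dot n D D.
Proof.
  intros H1 H2 H3 u. unfold u, cc.
  assert (E : forall (lhs rhs : R), lhs - rhs = (fy2 - fy1 - dot n p1 D)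
     + (- (5 * LF) / 2 + gamma * (5 * LF) * (5 * LF) / 2) * dot n D D
     + gamma * (5 * LF) * dot n e D + gamma / 2 * dot n e e + LF * dot n D D -> lhs <= rhs + 0 ->
     True) by auto.
  clear E.
  apply Rminus_le. dexp. rewrite ?(dot_comm n D e), ?(dot_comm n D p1), ?(dot_comm n e p1).
  match goal with |- ?l <= 0 => replace l with ((fy2 - fy1 - dot n p1 D)
     + (- (5 * LF) / 2 + gamma * (5 * LF) * (5 * LF) / 2) * dot n D D
     + gamma * (5 * LF) * dot n e D + gamma / 2 * dot n e e + LF * dot n D D) by (field; lra) end.
  pose proof gl. pose proof (dot_ge0 n D).
  assert (gamma * (5 * LF) * dot n e D <= gamma * (5 * LF) * (LF * dot n D D))
    by (apply Rmult_le_compat_l; nra).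
  assert (gamma / 2 * dot n e e <= gamma / 2 * (LF * LF * dot n D D))
    by (apply Rmult_le_compat_l; lra).
  assert (gamma * LF * LF * dot n D D <= / 12 * LF * dot n D D).
  { apply Rmult_le_compat_r; auto. apply Rmult_le_compat_r; lra. }
  nra.
Qed.


Hypothesis Hprop : proper G.
Hypothesis Hz : forall t,
     is_argmin (fun w => eplus (G w)
                  (- (5 * LF / 2) * norm w ^ 2
                   + / (2 * gamma) * norm (vsub (vsub (vscal 2 (y (S t))) (x t)) w) ^ 2))
       (z (S t)).
Hypothesis Hx : forall t, x (S t) = vadd (x t) (vscal 2 (vsub (z (S t)) (y (S t)))).

Definition gz t := match G (z t) with Some a => a | None => 0 end.

Lemma Gz_fin t : G (z (S t)) = Some (gz (S t)).
Proof.
  destruct Hprop as [w [aw Hw]]. specialize (Hz t w). unfold gz.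
  destruct (G (z (S t))) eqn:E; auto. simpl in Hz. rewrite E, Hw in Hz. simpl in Hz. contradiction.
Qed.

Lemma zopt_ineq t w gw : G w = Some gw ->
  gz (S t) + Qf (y (S t)) (x t) (z (S t)) <= gw + Qf (y (S t)) (x t) w.
Proof.
  intros Hw. pose proof (Hz t w) as H. cbv beta in H. rewrite Hw, Gz_fin in H. simpl in H. unfold Qf. exact H.
Qed.

Lemma zrel t : vsub (z (S t)) (y (S t)) =
  vscal (1/2) (vadd (vscal (1 + gamma * (5 * LF)) (vsub (y (S (S t))) (y (S t))))
                    (vscal gamma (vsub (gradF (y (S (S t)))) (gradF (y (S t)))))).
Proof.
  apply vec_ext; intros i.
  pose proof (f_equal (fun f => f i) (Hx t)) as E1.
  pose proof (f_equal (fun f => f i) (yopt t)) as E2.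
  pose proof (f_equal (fun f => f i) (yopt (S t))) as E3.
  simpl in *. unfold vadd, vscal, vsub in *. lra.
Qed.

Definition Phi t := F (y t) + dot n (gradF (y t)) (vsub (z t) (y t))
  + cc * dot n (vsub (z t) (y t)) (vsub (z t) (y t)) + gz t.

Lemma step_a t w gw : G w = Some gw ->
  Phi (S t) <= F (y (S t)) + dot n (gradF (y (S t))) (vsub w (y (S t)))
     + cc * dot n (vsub w (y (S t))) (vsub w (y (S t))) + gw.
Proof.
  intros Hw. pose proof (zopt_ineq t w gw Hw). rewrite (yopt t) in H.
  pose proof (quad_psi (y (S t)) (gradF (y (S t))) w (z (S t))). unfold Phi. lra.
Qed.

Lemma descent_step t : Phi (S (S t)) <=
  Phi (S t) - LF * dot n (vsub (y (S (S t))) (y (S t))) (vsub (y (S (S t))) (y (S t))).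
Proof.
  eapply Rle_trans. apply (step_a (S t) (z (S t)) (gz (S t)) (Gz_fin t)).
  set (y1 := y (S t)). set (y2 := y (S (S t))). set (D := vsub y2 y1).
  set (e := vsub (gradF y2) (gradF y1)).
  pose proof (descent_alg D e (gradF y2) (F y1) (F y2)) as A.
  assert (H1 : F y2 - F y1 <= dot n (gradF y2) D).
  { pose proof (conv_grad y1 y2).
    replace (vsub y1 y2) with (vscal (-1) D) in H by (apply vec_ext; intros; unfold D, vscal, vsub; ring).
    rewrite dot_scalr in H. lra. }
  specialize (A H1 (lip_dot y2 y1) (lip_sq y2 y1)). simpl in A.
  pose proof (zrel t) as Z. fold y1 y2 D e in Z.
  unfold Phi. fold y1.
  replace (vsub (z (S t)) y2) with (vsub (vsub (z (S t)) y1) D)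
    by (apply vec_ext; intros; unfold D, vsub; ring).
  replace (gradF y1) with (vsub (gradF y2) e) by (apply vec_ext; intros; unfold e, vsub; ring).
  rewrite Z. lra.
Qed.


Hypothesis Hprox : forall (w : vec n) (tau : R), 0 < tau ->
     exists u, is_argmin (fun u => eplus (escale tau (G u)) (/2 * norm (vsub u w) ^ 2)) u.
Hypothesis Hcoer : coercive F G.

Lemma G_lb : exists m0, forall u gu, G u = Some gu -> m0 - / 2 * dot n u u <= gu.
Proof.
  destruct (Hprox vzero 1 ltac:(lra)) as [u0 Hu0].
  assert (E : forall u : vec n, vsub u vzero = u) by (intros; apply vec_ext; intros; unfold vsub, vzero; ring).
  destruct Hprop as [w [aw Hw]].
  pose proof (Hu0 w) as Hw0. cbv beta in Hw0. rewrite Hw in Hw0.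
  destruct (G u0) as [g0|] eqn:Eg0; [|simpl in Hw0; contradiction].
  exists (g0 + / 2 * dot n u0 u0). intros u gu Hu.
  pose proof (Hu0 u) as H. cbv beta in H. rewrite Hu, Eg0, !E, !norm_sq in H. simpl in H. lra.
Qed.

Lemma F_lb u : F vzero - / 2 * dot n (gradF vzero) (gradF vzero) - / 2 * dot n u u <= F u.
Proof.
  pose proof (conv_grad u vzero).
  replace (vsub u vzero) with u in H by (apply vec_ext; intros; unfold vsub, vzero; ring).
  pose proof (dot_ge0 n (vadd (gradF vzero) u)) as H0. rewrite dot_addl, !dot_addr, (dot_comm n u (gradF vzero)) in H0.
  lra.
Qed.

Lemma cc_gt : 3 * LF < cc.
Proof.
  unfold cc. pose proof gl.
  assert (12 * LF < / gamma).
  { apply (Rmult_lt_reg_l gamma); auto. rewrite Rinv_r by lra. lra. }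
  replace (/ (2 * gamma)) with (/ 2 * / gamma) by (field; lra). lra.
Qed.

Lemma Phi_ge t : F (z (S t)) + gz (S t) + (cc - LF) * dot n (vsub (z (S t)) (y (S t))) (vsub (z (S t)) (y (S t)))
   <= Phi (S t).
Proof. pose proof (descent (z (S t)) (y (S t))). unfold Phi. lra. Qed.

Lemma Phi_le1 t : Phi (S t) <= Phi 1.
Proof.
  induction t. lra. pose proof (descent_step t). pose proof (dot_ge0 n (vsub (y (S (S t))) (y (S t)))).
  nra.
Qed.

Lemma z_bound : exists R0, 0 <= R0 /\ forall t, norm (z (S t)) <= R0.
Proof.
  destruct (Hcoer (Phi 1)) as [r Hr]. exists (Rmax r 0). split. apply Rmax_r.
  intros t. destruct (Rle_dec (norm (z (S t))) r). eapply Rle_trans; eauto; apply Rmax_l.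
  exfalso. specialize (Hr (z (S t)) ltac:(lra)). rewrite Gz_fin in Hr. simpl in Hr.
  pose proof (Phi_ge t). pose proof (Phi_le1 t). pose proof cc_gt.
  pose proof (dot_ge0 n (vsub (z (S t)) (y (S t)))). nra.
Qed.

Lemma Phi_lb : exists m, forall t, m <= Phi (S t) /\
   (cc - LF) * dot n (vsub (z (S t)) (y (S t))) (vsub (z (S t)) (y (S t))) <= Phi 1 - m.
Proof.
  destruct z_bound as [R0 [HR0 Hz0]]. destruct G_lb as [m0 Hm0].
  exists (F vzero - / 2 * dot n (gradF vzero) (gradF vzero) + m0 - R0 * R0).
  intros t. pose proof (Hm0 _ _ (Gz_fin t)). pose proof (F_lb (z (S t))).
  pose proof (Hz0 t). rewrite <- norm_mul in *. pose proof (norm_ge0 n (z (S t))).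
  assert (norm (z (S t)) * norm (z (S t)) <= R0 * R0) by nra.
  pose proof (Phi_ge t). pose proof (Phi_le1 t). pose proof cc_gt.
  pose proof (dot_ge0 n (vsub (z (S t)) (y (S t)))). rewrite <- norm_mul in *. nra.
Qed.


Lemma vsub0 (u : vec n) : vsub u vzero = u.
Proof. apply vec_ext; intros; unfold vsub, vzero; ring. Qed.

Lemma zy_bound : exists B, 0 <= B /\ forall t, norm (vsub (z (S t)) (y (S t))) <= B.
Proof.
  destruct Phi_lb as [m Hm]. pose proof cc_gt.
  set (B1 := Rmax ((Phi 1 - m) / (cc - LF)) 0).
  exists (sqrt B1). split. apply sqrt_pos. intros t.
  apply norm_le_of_sq. apply sqrt_pos. rewrite sqrt_sqrt by apply Rmax_r.
  eapply Rle_trans; [|apply Rmax_l]. destruct (Hm t) as [_ H2].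
  apply (Rmult_le_reg_l (cc - LF)). lra. field_simplify; lra.
Qed.

Lemma y_bound : exists Ry, 0 <= Ry /\ forall t, norm (y (S t)) <= Ry.
Proof.
  destruct z_bound as [R0 [HR0 H0]]. destruct zy_bound as [B [HB H1]].
  exists (R0 + B). split. lra. intros t.
  pose proof (norm_sub_tri n (y (S t)) (z (S t)) vzero). rewrite !vsub0, norm_sub_sym in H.
  specialize (H0 t). specialize (H1 t). lra.
Qed.

Lemma gradF_bound u : norm (gradF u) <= norm (gradF vzero) + LF * norm u.
Proof.
  pose proof (norm_sub_tri n (gradF u) (gradF vzero) vzero). rewrite !vsub0 in H.
  pose proof (Hlip u vzero). rewrite vsub0 in H0. lra.
Qed.

Lemma x_bound : exists Rx, 0 <= Rx /\ forall t, norm (x t) <= Rx.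
Proof.
  destruct y_bound as [Ry [HRy H0]].
  exists (Ry + gamma * (norm (gradF vzero) + LF * Ry + 5 * LF * Ry)).
  split. pose proof (norm_ge0 n (gradF vzero)). apply Rplus_le_le_0_compat; auto; apply Rmult_le_pos; [lra|]. assert (0 <= LF * Ry) by (apply Rmult_le_pos; lra). lra.
  intros t. rewrite (yopt t). specialize (H0 t).
  eapply Rle_trans. apply norm_triangle. rewrite norm_scal, Rabs_pos_eq by lra.
  pose proof (norm_triangle n (gradF (y (S t))) (vscal (5 * LF) (y (S t)))).
  rewrite norm_scal, Rabs_pos_eq in H by lra. pose proof (gradF_bound (y (S t))).
  assert (norm (gradF (y (S t))) + 5 * LF * norm (y (S t)) <= norm (gradF vzero) + LF * Ry + 5 * LF * Ry) by nra.
  nra.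
Qed.

Lemma all_bounded : exists M, forall t, norm (y t) <= M /\ norm (z t) <= M /\ norm (x t) <= M.
Proof.
  destruct z_bound as [R0 [HR0 H0]]. destruct y_bound as [Ry [HRy H1]]. destruct x_bound as [Rx [HRx H2]].
  exists (Rmax (Rmax (norm (y 0)) (norm (z 0))) (Rmax Rx (Rmax Ry R0))).
  intros [|t]; repeat split.
  - eapply Rle_trans; [|apply Rmax_l]; apply Rmax_l.
  - eapply Rle_trans; [|apply Rmax_l]; apply Rmax_r.
  - eapply Rle_trans; [|apply Rmax_r]. eapply Rle_trans; [|apply Rmax_l]. auto.
  - eapply Rle_trans; [|apply Rmax_r]. eapply Rle_trans; [|apply Rmax_r]. eapply Rle_trans; [|apply Rmax_l]. auto.
  - eapply Rle_trans; [|apply Rmax_r]. eapply Rle_trans; [|apply Rmax_r]. eapply Rle_trans; [|apply Rmax_r]. auto.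
  - eapply Rle_trans; [|apply Rmax_r]. eapply Rle_trans; [|apply Rmax_l]. auto.
Qed.

Lemma Phi_cv : exists l, Un_cv (fun k => Phi (S k)) l.
Proof.
  destruct Phi_lb as [m Hm].
  destruct (decreasing_cv (fun k => Phi (S k))) as [l Hl].
  - intros k. pose proof (descent_step k). pose proof (dot_ge0 n (vsub (y (S (S k))) (y (S k)))). nra.
  - exists (- m). intros r [i Hi]. unfold opp_seq in Hi. subst. destruct (Hm i). lra.
  - exists l; auto.
Qed.

Lemma D_small eps : 0 < eps -> exists N, forall k, (N <= k)%nat ->
  dot n (vsub (y (S (S k))) (y (S k))) (vsub (y (S (S k))) (y (S k))) < eps.
Proof.
  intros He. destruct Phi_cv as [l Hl].
  destruct (Hl (LF * eps / 2)) as [N HN]. apply Rdiv_lt_0_compat; [nra|lra].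
  exists N. intros k Hk. pose proof (HN k Hk). pose proof (HN (S k) ltac:(lia)).
  unfold R_dist in *. apply Rabs_def2 in H. apply Rabs_def2 in H0.
  pose proof (descent_step k).
  apply (Rmult_lt_reg_l LF); auto. lra.
Qed.

Lemma zy_small eps : 0 < eps -> exists N, forall t, (N <= t)%nat -> norm (vsub (z t) (y t)) < eps.
Proof.
  intros He. set (K := / 2 * (1 + gamma * (5 * LF) + gamma * LF)).
  assert (HK : 0 < K) by (unfold K; nra).
  destruct (D_small ((eps / K) * (eps / K))) as [N HN].
  { apply Rmult_lt_0_compat; apply Rdiv_lt_0_compat; auto. }
  exists (S N). intros t Ht. destruct t as [|k]. lia.
  specialize (HN k ltac:(lia)). rewrite zrel.
  set (D := vsub (y (S (S k))) (y (S k))).  fold D in HN.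
  assert (HD : norm D < eps / K) by (apply norm_lt_sq; auto; apply Rdiv_lt_0_compat; auto).
  rewrite norm_scal, Rabs_pos_eq by lra.
  pose proof (norm_triangle n (vscal (1 + gamma * (5 * LF)) D)
    (vscal gamma (vsub (gradF (y (S (S k)))) (gradF (y (S k)))))).
  rewrite !norm_scal, !Rabs_pos_eq in H by nra.
  pose proof (Hlip (y (S (S k))) (y (S k))). fold D in H0.
  pose proof (norm_ge0 n D).
  assert (norm D * K < eps) by (apply (Rmult_lt_reg_r (/ K)); [apply Rinv_0_lt_compat; auto|];
     replace (norm D * K * / K) with (norm D) by (field; lra); auto).
  unfold K in H2. nra.
Qed.


Hypothesis Hlsc : lsc G.

Lemma small_zero a : 0 <= a -> (forall e, 0 < e -> a < e) -> a = 0.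
Proof.
  intros H0 H. destruct H0; auto. specialize (H (a / 2) ltac:(lra)). lra.
Qed.

Lemma Rabs_m1 : Rabs (-1) = 1.
Proof. unfold Rabs; destruct Rcase_abs; lra. Qed.

Lemma frechet t : frechet_subgrad G (z (S t))
  (vadd (vscal (-1) (gradF (y (S t)))) (vscal (5 * LF - / gamma) (vsub (z (S t)) (y (S t))))).
Proof.
  exists (gz (S t)). split. apply Gz_fin. intros eps He. pose proof cc_gt.
  exists (eps / cc). split. apply Rdiv_lt_0_compat; lra. intros w [Hw1 Hw2].
  destruct (G w) as [gw|] eqn:Ew; auto.
  pose proof (zopt_ineq t w gw Ew). rewrite (yopt t) in H0.
  pose proof (quad_fr (y (S t)) (gradF (y (S t))) w (z (S t))).
  rewrite <- norm_mul in H1.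
  assert (cc * norm (vsub w (z (S t))) < eps).
  { apply (Rmult_lt_reg_r (/ cc)). apply Rinv_0_lt_compat; lra.
    replace (cc * norm (vsub w (z (S t))) * / cc) with (norm (vsub w (z (S t)))) by (field; lra). auto. }
  nra.
Qed.

Lemma phi_ge (phi : nat -> nat) : (forall k, (phi k < phi (S k))%nat) -> forall k, (k <= phi k)%nat.
Proof. intros H k. induction k. lia. specialize (H k). lia. Qed.

Lemma gz_bound : exists BG, forall t, gz (S t) <= BG.
Proof.
  destruct z_bound as [R0 [HR0 H0]].
  exists (Phi 1 - (F vzero - / 2 * dot n (gradF vzero) (gradF vzero)) + / 2 * (R0 * R0)).
  intros t. pose proof (Phi_ge t). pose proof (Phi_le1 t). pose proof (F_lb (z (S t))) as HF.
  pose proof cc_gt. pose proof (dot_ge0 n (vsub (z (S t)) (y (S t)))).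
  specialize (H0 t). rewrite <- (norm_mul n (z (S t))) in HF. pose proof (norm_ge0 n (z (S t))).
  assert (norm (z (S t)) * norm (z (S t)) <= R0 * R0) by nra. assert (0 <= (cc - LF) * dot n (vsub (z (S t)) (y (S t))) (vsub (z (S t)) (y (S t)))) by (apply Rmult_le_pos; lra). lra.
Qed.

Lemma v_bound : exists V, 0 <= V /\ forall t,
  norm (vadd (vscal (-1) (gradF (y (S t)))) (vscal (5 * LF - / gamma) (vsub (z (S t)) (y (S t))))) <= V.
Proof.
  destruct y_bound as [Ry [HRy H0]]. destruct zy_bound as [B [HB H1]].
  exists (norm (gradF vzero) + LF * Ry + Rabs (5 * LF - / gamma) * B).
  split. pose proof (norm_ge0 n (gradF vzero)). pose proof (Rabs_pos (5 * LF - / gamma)). nra.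
  intros t. eapply Rle_trans. apply norm_triangle. rewrite !norm_scal, Rabs_m1.
  pose proof (gradF_bound (y (S t))). specialize (H0 t). specialize (H1 t).
  pose proof (Rabs_pos (5 * LF - / gamma)). nra.
Qed.

Lemma cluster yb zb xb : cluster_point3 y z x yb zb xb ->
  yb = zb /\ limiting_subgrad G zb (vscal (-1) (gradF zb)).
Proof.
  intros [phi [Hphi [Cy [Cz Cx]]]].
  pose proof (phi_ge phi Hphi) as Pge.
  assert (Eyz : yb = zb).
  { apply norm_eq0_eq. apply small_zero. apply norm_ge0. intros e He.
    destruct (Cy (e / 3) ltac:(lra)) as [N1 H1]. destruct (Cz (e / 3) ltac:(lra)) as [N2 H2].
    destruct (zy_small (e / 3) ltac:(lra)) as [N3 H3].
    set (k := (N1 + N2 + N3)%nat).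
    specialize (H1 k ltac:(lia)). specialize (H2 k ltac:(lia)). specialize (H3 (phi k)).
    specialize (Pge k). specialize (H3 ltac:(unfold k in *; lia)).
    pose proof (norm_sub_tri n yb (y (phi k)) zb). pose proof (norm_sub_tri n (y (phi k)) (z (phi k)) zb).
    rewrite norm_sub_sym in H1, H3. lra. }
  split; auto. subst yb.
  destruct gz_bound as [BG HBG].
  destruct (G zb) as [gzb|] eqn:Ezb.
  2:{ exfalso. destruct (Hlsc zb BG) as [dl [Hdl Hd]]. rewrite Ezb; simpl; auto.
      destruct (Cz dl Hdl) as [N HN]. specialize (HN (S N) ltac:(lia)).
      specialize (Hd _ HN). pose proof (Pge (S N)).
      destruct (phi (S N)) as [|t] eqn:Et. lia. rewrite Gz_fin in Hd. simpl in Hd.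
      specialize (HBG t). lra. }
  set (vs := fun k => vadd (vscal (-1) (gradF (y (phi (S k)))))
              (vscal (5 * LF - / gamma) (vsub (z (phi (S k))) (y (phi (S k)))))).
  exists (fun k => z (phi (S k))), vs, gzb. split; auto. split; [|split; [|split]].
  - intros e He. destruct (Cz e He) as [N HN]. exists N. intros t Ht. apply HN. lia.
  - intros e He. destruct v_bound as [V [HV0 HV]]. pose proof cc_gt.
    destruct (Hlsc zb (gzb - e)) as [dl [Hdl Hd]]. rewrite Ezb. simpl. lra.
    set (h0 := Rmin dl (Rmin 1 (e / (V + cc + 1)))).
    assert (Hh0 : 0 < h0).
    { unfold h0. apply Rmin_glb_lt; auto. apply Rmin_glb_lt. lra. apply Rdiv_lt_0_compat; lra. }
    destruct (Cz h0 Hh0) as [N HN]. exists N. intros k Hk.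
    specialize (HN (S k) ltac:(lia)). pose proof (Pge (S k)).
    assert (Hm1 : norm (vsub (z (phi (S k))) zb) < dl)
      by (eapply Rlt_le_trans; [apply HN| apply Rmin_l]).
    assert (Hm2 : norm (vsub (z (phi (S k))) zb) < 1)
      by (eapply Rlt_le_trans; [apply HN| unfold h0; eapply Rle_trans; [apply Rmin_r| apply Rmin_l]]).
    assert (Hm3 : norm (vsub (z (phi (S k))) zb) < e / (V + cc + 1))
      by (eapply Rlt_le_trans; [apply HN| unfold h0; eapply Rle_trans; [apply Rmin_r| apply Rmin_r]]).
    specialize (Hd _ Hm1). clear HN.
    destruct (phi (S k)) as [|t] eqn:Et. lia.
    rewrite Gz_fin in Hd |- *. simpl in Hd. exists (gz (S t)). split; auto.
    pose proof (zopt_ineq t zb gzb Ezb). rewrite (yopt t) in H1.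
    pose proof (quad_fr (y (S t)) (gradF (y (S t))) zb (z (S t))).
    set (v := vadd (vscal (-1) (gradF (y (S t)))) (vscal (5 * LF - / gamma) (vsub (z (S t)) (y (S t))))) in *.
    set (hv := vsub zb (z (S t))) in *.
    pose proof (CS n (vscal (-1) v) hv). rewrite dot_scall, norm_scal, Rabs_m1 in H3.
    rewrite <- norm_mul in H2. specialize (HV t). fold v in HV.
    assert (Hhv : norm hv = norm (vsub (z (S t)) zb)) by (unfold hv; apply norm_sub_sym).
    pose proof (norm_ge0 n hv).
    assert (norm hv * (V + cc + 1) < e).
    { rewrite Hhv. apply (Rmult_lt_reg_r (/ (V + cc + 1))). apply Rinv_0_lt_compat; lra.
      replace (e * / (V + cc + 1)) with (e / (V + cc + 1)) by auto.
      replace (norm (vsub (z (S t)) zb) * (V + cc + 1) * / (V + cc + 1)) with (norm (vsub (z (S t)) zb))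
        by (field; lra). auto. }
    assert (norm v * norm hv <= V * norm hv) by (apply Rmult_le_compat_r; auto).
    assert (cc * (norm hv * norm hv) <= cc * norm hv) by (apply Rmult_le_compat_l; [lra|]; nra).
    apply Rabs_def1; nra.
  - intros e He.
    destruct (Cy (e / (2 * LF)) ltac:(apply Rdiv_lt_0_compat; lra)) as [N1 H1].
    set (c' := Rabs (5 * LF - / gamma)).
    assert (Hc' : 0 <= c') by apply Rabs_pos.
    destruct (zy_small (e / (2 * (c' + 1))) ltac:(apply Rdiv_lt_0_compat; lra)) as [N2 H2].
    exists (N1 + N2)%nat. intros k Hk.
    specialize (H1 (S k) ltac:(lia)). pose proof (Pge (S k)). specialize (H2 (phi (S k)) ltac:(lia)).
    unfold vs.
    set (m := phi (S k)) in *.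
    replace (vsub (vadd (vscal (-1) (gradF (y m))) (vscal (5 * LF - / gamma) (vsub (z m) (y m))))
        (vscal (-1) (gradF zb))) with
      (vadd (vsub (gradF zb) (gradF (y m))) (vscal (5 * LF - / gamma) (vsub (z m) (y m))))
      by (apply vec_ext; intros; unfold vadd, vsub, vscal; ring).
    eapply Rle_lt_trans. apply norm_triangle. rewrite norm_scal. fold c'.
    pose proof (Hlip zb (y m)). rewrite norm_sub_sym in H1.
    assert (LF * norm (vsub zb (y m)) < e / 2).
    { apply (Rmult_lt_reg_r (/ LF)). apply Rinv_0_lt_compat; lra.
      replace (LF * norm (vsub zb (y m)) * / LF) with (norm (vsub zb (y m))) by (field; lra).
      replace (e / 2 * / LF) with (e / (2 * LF)) by (field; lra). auto. }
    assert (c' * norm (vsub (z m) (y m)) < e / 2).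
    { pose proof (norm_ge0 n (vsub (z m) (y m))).
      assert ((c' + 1) * norm (vsub (z m) (y m)) < e / 2).
      { apply (Rmult_lt_reg_r (/ (c' + 1))). apply Rinv_0_lt_compat; lra.
        replace ((c' + 1) * norm (vsub (z m) (y m)) * / (c' + 1)) with (norm (vsub (z m) (y m))) by (field; lra).
        replace (e / 2 * / (c' + 1)) with (e / (2 * (c' + 1))) by (field; lra). auto. }
      nra. }
    lra.
  - intros k. unfold vs. pose proof (Pge (S k)).
    destruct (phi (S k)) as [|t] eqn:Et. lia. apply frechet.
Qed.

End Main.
Theorem corollary1 (n : nat) (F : vec n -> R) (gradF : vec n -> vec n)
  (G : vec n -> ereal) (LF gamma : R)
  (y z x : nat -> vec n) :
  convex F ->
  has_gradient F gradF ->
  0 < LF ->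
  lipschitz gradF LF ->
  proper G ->
  lsc G ->
  (forall (w : vec n) (tau : R), 0 < tau ->
     exists u, is_argmin (fun u => eplus (escale tau (G u)) (/2 * norm (vsub u w) ^ 2)) u) ->
  coercive F G ->
  0 < gamma -> gamma < / (12 * LF) ->
  (forall t,
     is_argmin_R (fun v => F v + 5 * LF / 2 * norm v ^ 2
                   + / (2 * gamma) * norm (vsub v (x t)) ^ 2) (y (S t))) ->
  (forall t,
     is_argmin (fun w => eplus (G w)
                  (- (5 * LF / 2) * norm w ^ 2
                   + / (2 * gamma) * norm (vsub (vsub (vscal 2 (y (S t))) (x t)) w) ^ 2))
       (z (S t))) ->
  (forall t, x (S t) = vadd (x t) (vscal 2 (vsub (z (S t)) (y (S t))))) ->
  (exists M, forall t, norm (y t) <= M /\ norm (z t) <= M /\ norm (x t) <= M) /\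
  (forall yb zb xb, cluster_point3 y z x yb zb xb ->
     yb = zb /\ limiting_subgrad G zb (vscal (-1) (gradF zb))).
Proof.
  intros. split.
  - apply (all_bounded n F gradF G LF gamma y z x); assumption.
  - intros yb zb xb Hc. apply (cluster n F gradF G LF gamma y z x) with (xb := xb); assumption.
Qed.
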